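(* Let $k\in\mathbb{N}$. The set $$\mathcal{P}=\Big\{\sum_{i=1}^N a_i p_{v_i}: N\in\mathbb{N},\ a_i\in\mathbb{C},\ v_i\in T\Big\}$$ is dense in $\mathcal{L}^{(k)}_0$ with respect to the norm $\|\cdot\|_k$. In fact, $\mathcal{L}^{(k)}_0$ is a closed separable subspace of $\mathcal{L}^{(k)}$.
   Context: $T$ is a tree (locally finite, connected, simply connected graph, identified with its vertex set) without terminal vertices, rooted at $o$. $|v|$ is the distance from $o$ to $v$; for $v\ne o$, $v^-$ is the parent of $v$. $T^*=T\setminus\{o\}$, $Df(v)=|f(v)-f(v^-)|$. For $x\ge1$: $\ell_0(x)=1$, $\ell_1(x)=1+\ln x$, $\ell_j(x)=1+\ln\ell_{j-1}(x)$ for $j\ge2$. $\mathcal{L}^{(k)}$ is the space of $f:T\to\mathbb{C}$ with $\sup_{v\in T^*}|v|\prod_{j=0}^{k-1}\ell_j(|v|)Df(v)<\infty$, normed by $\|f\|_k=|f(o)|+\sup_{v\in T^*}|v|\prod_{j=0}^{k-1}\ell_j(|v|)Df(v)$; $\mathcal{L}^{(k)}_0$ is its subspace of $f$ with $\lim_{|v|\to\infty}|v|\prod_{j=0}^{k-1}\ell_j(|v|)Df(v)=0$. For $v\in T$, $S_v$ is the sector consisting of $v$ and all its descendants (vertices $w$ such that $v$ lies on the path from $o$ to $w$), and $p_v=\chi_{S_v}$ is its characteristic function. *)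

(* Defs.v *)
From Stdlib Require Import Reals List ClassicalEpsilon.
From Coquelicot Require Import Coquelicot.
Open Scope R_scope.

(* A rooted tree T with root o, presented by its parent map v |-> v^-
   (with the convention par o = o). Edges are {v, par v} for v <> o. *)
Section Tree.
Variables (V : Type) (o : V) (par : V -> V).

Definition adj (u v : V) : Prop := (u <> o /\ par u = v) \/ (v <> o /\ par v = u).

Definition terminal (v : V) : Prop :=
  exists u, adj v u /\ forall u', adj v u' -> u' = u.

Definition is_tree_rooted : Prop :=
  par o = o /\
  (* connected: every vertex reaches the root (this also forces acyclicity) *)
  (forall v, exists n, Nat.iter n par v = o) /\
  (forall v, exists l : list V, forall u, adj v u -> In u l) /\
  (forall v, ~ terminal v).
End Tree.

Record rooted_tree := RootedTree {
  vtx :> Type;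
  root : vtx;
  parent : vtx -> vtx;
  treeP : is_tree_rooted vtx root parent
}.

Section Spaces.
Variable T : rooted_tree.
Notation o := (root T).
Notation par := (parent T).

Definition depth (v : T) : nat :=
  epsilon (inhabits 0%nat)
    (fun n => Nat.iter n par v = o /\ forall m, (m < n)%nat -> Nat.iter m par v <> o).

Fixpoint ell (j : nat) (x : R) : R :=
  match j with
  | O => 1
  | S O => 1 + ln x
  | S ((S _) as j') => 1 + ln (ell j' x)
  end.

Fixpoint prod_ell (k : nat) (x : R) : R :=
  match k with
  | O => 1
  | S k' => prod_ell k' x * ell k' x
  end.

Definition wt (k : nat) (v : T) : R :=
  INR (depth v) * prod_ell k (INR (depth v)).

Definition Df (f : T -> C) (v : T) : R := Cmod (Cminus (f v) (f (par v))).

Definition in_L (k : nat) (f : T -> C) : Prop :=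
  exists M : R, forall v, v <> o -> wt k v * Df f v <= M.

Definition in_L0 (k : nat) (f : T -> C) : Prop :=
  in_L k f /\
  forall eps, 0 < eps -> exists N : nat, forall v, v <> o -> (N <= depth v)%nat ->
    Rabs (wt k v * Df f v) < eps.

Definition normk (k : nat) (f : T -> C) : R :=
  Cmod (f o) + real (Lub_Rbar (fun x => exists v, v <> o /\ x = wt k v * Df f v)).

Definition in_sector (v w : T) : Prop := exists n, Nat.iter n par w = v.

Definition p (v : T) : T -> C :=
  fun w => if excluded_middle_informative (in_sector v w) then RtoC 1 else RtoC 0.

Definition in_P (g : T -> C) : Prop :=
  exists l : list (C * T),
    forall w, g w = fold_right (fun av acc => Cplus (Cmult (fst av) (p (snd av) w)) acc)
                               (RtoC 0) l.

Definition fsub (f g : T -> C) : T -> C := fun w => Cminus (f w) (g w).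
End Spaces.

(* Main.v *)
Require Import Defs.
From Stdlib Require Import Reals List Lia Lra Cantor ClassicalEpsilon Classical.
From Coquelicot Require Import Coquelicot.
Open Scope R_scope.

Lemma iter_root (T : rooted_tree) m : Nat.iter m (parent T) (root T) = root T.
Proof.
  destruct (treeP T) as [H _]. induction m; simpl; [reflexivity|]. rewrite IHm; exact H.
Qed.

Lemma least_ex (Q : nat -> Prop) n : Q n -> exists m, Q m /\ forall j, (j < m)%nat -> ~ Q j.
Proof.
  revert Q. induction n as [n IH] using (well_founded_induction Wf_nat.lt_wf). intros Q Hn.
  destruct (classic (exists j, (j < n)%nat /\ Q j)) as [[j [Hj HQ]]|Hno].
  - exact (IH j Hj Q HQ).
  - exists n; split; [exact Hn|]. intros j Hj HQ; apply Hno; eauto.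
Qed.

Lemma depth_spec (T : rooted_tree) (v : T) :
  Nat.iter (depth T v) (parent T) v = root T /\
  forall m, (m < depth T v)%nat -> Nat.iter m (parent T) v <> root T.
Proof.
  unfold depth. apply epsilon_spec.
  destruct (treeP T) as [_ [H _]]. destruct (H v) as [n Hn].
  destruct (least_ex (fun n => Nat.iter n (parent T) v = root T) n Hn) as [m [Hm1 Hm2]].
  exists m; split; auto.
Qed.

Lemma depth_unique (T : rooted_tree) (v : T) n :
  Nat.iter n (parent T) v = root T ->
  (forall m, (m < n)%nat -> Nat.iter m (parent T) v <> root T) -> depth T v = n.
Proof.
  intros H1 H2. destruct (depth_spec T v) as [D1 D2].
  destruct (Nat.lt_trichotomy (depth T v) n) as [h|[h|h]]; auto.
  - exfalso; exact (H2 _ h D1).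
  - exfalso; exact (D2 _ h H1).
Qed.

Lemma depth_root (T : rooted_tree) : depth T (root T) = 0%nat.
Proof. apply depth_unique; [reflexivity| intros; lia]. Qed.

Lemma depth0 (T : rooted_tree) (v : T) : depth T v = 0%nat -> v = root T.
Proof. intros H. destruct (depth_spec T v) as [D _]. rewrite H in D. exact D. Qed.

Lemma depth_par_S (T : rooted_tree) (v : T) : v <> root T ->
  depth T v = S (depth T (parent T v)).
Proof.
  intros Hv. destruct (depth_spec T (parent T v)) as [D1 D2].
  apply depth_unique.
  - rewrite Nat.iter_succ_r; exact D1.
  - intros m Hm. destruct m; [simpl; exact Hv|]. rewrite Nat.iter_succ_r. apply D2; lia.
Qed.

Lemma depth_par (T : rooted_tree) (v : T) : depth T (parent T v) = (depth T v - 1)%nat.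
Proof.
  destruct (classic (v = root T)) as [->|Hv].
  - destruct (treeP T) as [H _]. rewrite H, depth_root. reflexivity.
  - rewrite (depth_par_S T v Hv). lia.
Qed.

Lemma depth_iter (T : rooted_tree) j (v : T) :
  depth T (Nat.iter j (parent T) v) = (depth T v - j)%nat.
Proof.
  induction j; simpl. lia. rewrite depth_par, IHj. lia.
Qed.

Lemma depth_pos (T : rooted_tree) (v : T) : v <> root T -> (1 <= depth T v)%nat.
Proof. intros H. destruct (depth T v) eqn:E; [|lia]. exfalso; apply H, depth0, E. Qed.

Lemma iter_depth_ge (T : rooted_tree) (v : T) n : (depth T v <= n)%nat ->
  Nat.iter n (parent T) v = root T.
Proof.
  intros H. replace n with ((n - depth T v) + depth T v)%nat by lia.
  rewrite Nat.iter_add, (proj1 (depth_spec T v)). apply iter_root.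
Qed.

Lemma sector_iter (T : rooted_tree) (v w : T) : in_sector T v w ->
  v = Nat.iter (depth T w - depth T v) (parent T) w /\ (depth T v <= depth T w)%nat.
Proof.
  intros [n Hn]. subst v. rewrite depth_iter.
  destruct (Compare_dec.le_lt_dec n (depth T w)) as [h|h].
  - split; [f_equal; lia| lia].
  - replace (depth T w - (depth T w - n))%nat with (depth T w) by lia.
    rewrite (iter_depth_ge T w n) by lia.
    rewrite (proj1 (depth_spec T w)). split; [reflexivity|lia].
Qed.

Lemma sector_par (T : rooted_tree) (v w : T) : w <> v ->
  (in_sector T v w <-> in_sector T v (parent T w)).
Proof.
  intros Hw; split.
  - intros [n Hn]. destruct n; [simpl in Hn; congruence|].
    exists n. rewrite <- Nat.iter_succ_r. exact Hn.
  - intros [n Hn]. exists (S n). rewrite Nat.iter_succ_r. exact Hn.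
Qed.

Lemma p_par (T : rooted_tree) (v w : T) : w <> v -> p T v w = p T v (parent T w).
Proof.
  intros Hw. unfold p.
  destruct (excluded_middle_informative (in_sector T v w)) as [h1|h1];
  destruct (excluded_middle_informative (in_sector T v (parent T w))) as [h2|h2]; auto.
  - exfalso; apply h2, (sector_par T v w Hw); auto.
  - exfalso; apply h1, (sector_par T v w Hw); auto.
Qed.

Lemma p_root (T : rooted_tree) (w : T) : p T (root T) w = RtoC 1.
Proof.
  unfold p. destruct (excluded_middle_informative _) as [h|h]; auto.
  exfalso; apply h. exists (depth T w). apply depth_spec.
Qed.

Lemma p_zero (T : rooted_tree) (v w : T) : ~ in_sector T v w -> p T v w = RtoC 0.
Proof. intros H. unfold p. destruct (excluded_middle_informative _); tauto. Qed.

Lemma p_one (T : rooted_tree) (v w : T) : in_sector T v w -> p T v w = RtoC 1.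
Proof. intros H. unfold p. destruct (excluded_middle_informative _); tauto. Qed.

Definition anc (T : rooted_tree) N (w : T) : T := Nat.iter (depth T w - N) (parent T) w.

Lemma depth_anc (T : rooted_tree) N (w : T) : depth T (anc T N w) = Nat.min N (depth T w).
Proof. unfold anc. rewrite depth_iter. lia. Qed.

Lemma anc_small (T : rooted_tree) N (w : T) : (depth T w <= N)%nat -> anc T N w = w.
Proof. intros H. unfold anc. replace (depth T w - N)%nat with 0%nat by lia. reflexivity. Qed.

Lemma anc_big (T : rooted_tree) N (w : T) : (N < depth T w)%nat -> anc T N w = anc T N (parent T w).
Proof.
  intros H. unfold anc. rewrite depth_par.
  replace (depth T w - N)%nat with (S (depth T w - 1 - N)) by lia.
  apply Nat.iter_succ_r.
Qed.

Lemma anc_S (T : rooted_tree) N (w : T) : (N < depth T w)%nat -> anc T N w = parent T (anc T (S N) w).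
Proof.
  intros H. unfold anc. rewrite <- Nat.iter_succ. f_equal. lia.
Qed.

Lemma anc_sector (T : rooted_tree) N (w : T) : in_sector T (anc T N w) w.
Proof. exists (depth T w - N)%nat. reflexivity. Qed.

Lemma anc_root (T : rooted_tree) N : anc T N (root T) = root T.
Proof. apply anc_small. rewrite depth_root. lia. Qed.
Definition nb (T : rooted_tree) (v : T) : list T :=
  proj1_sig (constructive_indefinite_description _ (proj1 (proj2 (proj2 (treeP T))) v)).

Lemma nb_spec (T : rooted_tree) (v u : T) : adj T (root T) (parent T) v u -> In u (nb T v).
Proof. unfold nb. destruct (constructive_indefinite_description _ _) as [l Hl]. simpl. auto. Qed.

Lemma all_le_ex (T : rooted_tree) N : exists l : list T, forall w, (depth T w <= N)%nat -> In w l.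
Proof.
  induction N.
  - exists (root T :: nil). intros w Hw. left. symmetry. apply depth0. lia.
  - destruct IHN as [l Hl]. exists (l ++ flat_map (nb T) l). intros w Hw.
    apply in_or_app. destruct (Compare_dec.le_lt_dec (depth T w) N) as [h|h]; [left; auto|right].
    assert (Hw0 : w <> root T) by (intros ->; rewrite depth_root in h; lia).
    apply in_flat_map. exists (parent T w). split.
    + apply Hl. rewrite depth_par. lia.
    + apply nb_spec. right. split; auto.
Qed.

Definition Tdec (T : rooted_tree) : forall x y : T, {x = y} + {x <> y} :=
  fun x y => excluded_middle_informative (x = y).

Definition all_le (T : rooted_tree) N : list T :=
  proj1_sig (constructive_indefinite_description _ (all_le_ex T N)).

Lemma all_le_spec (T : rooted_tree) N (w : T) : (depth T w <= N)%nat -> In w (all_le T N).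
Proof. unfold all_le. destruct (constructive_indefinite_description _ _) as [l Hl]. simpl. auto. Qed.

Definition lev (T : rooted_tree) N : list T :=
  nodup (Tdec T) (filter (fun v => Nat.eqb (depth T v) N) (all_le T N)).

Lemma lev_spec (T : rooted_tree) N (v : T) : In v (lev T N) <-> depth T v = N.
Proof.
  unfold lev. rewrite nodup_In, filter_In, Nat.eqb_eq. split; [tauto|].
  intros H; split; auto. apply all_le_spec. lia.
Qed.

Lemma lev_nodup (T : rooted_tree) N : NoDup (lev T N).
Proof. apply NoDup_nodup. Qed.

Definition fsum (T : rooted_tree) (l : list (C * T)) (w : T) : C :=
  fold_right (fun av acc => Cplus (Cmult (fst av) (p T (snd av) w)) acc) (RtoC 0) l.

Lemma fsum_cons (T : rooted_tree) a l (w : T) :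
  fsum T (a :: l) w = Cplus (Cmult (fst a) (p T (snd a) w)) (fsum T l w).
Proof. reflexivity. Qed.

Ltac ceq := repeat match goal with x : C |- _ => destruct x end;
  unfold Cplus, Cmult, Cminus, Copp, RtoC; simpl; apply injective_projections; simpl; ring.

Lemma fsum_app (T : rooted_tree) l1 l2 (w : T) : fsum T (l1 ++ l2) w = Cplus (fsum T l1 w) (fsum T l2 w).
Proof.
  induction l1; simpl app.
  - set (x := fsum T l2 w). ceq.
  - rewrite !fsum_cons, IHl1. set (x := fsum T l1 w). set (y := fsum T l2 w).
    set (z := p T (snd a) w). set (c := fst a). ceq.
Qed.

Lemma fsum_zero (T : rooted_tree) (c : T -> C) (vs : list T) (w : T) :
  (forall v, In v vs -> p T v w = RtoC 0) -> fsum T (map (fun v => (c v, v)) vs) w = RtoC 0.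
Proof.
  induction vs; intros H; [reflexivity|].
  rewrite map_cons, fsum_cons. simpl fst; simpl snd. rewrite IHvs by (intros; apply H; right; auto).
  rewrite H by (left; auto). set (x := c a). ceq.
Qed.

Lemma fsum_unique (T : rooted_tree) (c : T -> C) (vs : list T) (w u : T) :
  NoDup vs -> In u vs -> (forall v, In v vs -> v <> u -> p T v w = RtoC 0) ->
  fsum T (map (fun v => (c v, v)) vs) w = Cmult (c u) (p T u w).
Proof.
  induction vs as [|a vs IH]; intros Hnd Hu H; [destruct Hu|].
  inversion Hnd as [|a' vs' Ha Hnd']; subst.
  rewrite map_cons, fsum_cons. simpl fst; simpl snd.
  destruct (classic (a = u)) as [->|Hau].
  - rewrite (fsum_zero T c vs w). set (x := c u). set (y := p T u w). ceq.
    intros v Hv. apply H; [right; auto| intros ->; contradiction].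
  - destruct Hu as [Hu|Hu]; [contradiction|].
    rewrite IH by first [assumption | intros v Hv Hne; apply H; [right; exact Hv | exact Hne]]. rewrite (H a) by (first [left; reflexivity | exact Hau]). set (x := c u). set (y := p T u w).
    set (z := c a). ceq.
Qed.

Lemma in_P_fsum (T : rooted_tree) (g : T -> C) : in_P T g <-> exists l, forall w, g w = fsum T l w.
Proof. reflexivity. Qed.

Lemma in_P_anc (T : rooted_tree) (f : T -> C) N : in_P T (fun w => f (anc T N w)).
Proof.
  induction N.
  - exists ((f (root T), root T) :: nil). intros w. simpl. rewrite p_root.
    assert (anc T 0 w = root T) as ->.
    { unfold anc. rewrite Nat.sub_0_r. apply depth_spec. }
    set (x := f (root T)). ceq.
  - destruct IHN as [l Hl].
    exists (l ++ map (fun v => (Cminus (f v) (f (parent T v)), v)) (lev T (S N))).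
    intros w. change (f (anc T (S N) w) = fsum T (l ++ map (fun v => (Cminus (f v) (f (parent T v)), v)) (lev T (S N))) w).
    rewrite fsum_app. assert (Hl' : f (anc T N w) = fsum T l w) by apply Hl. rewrite <- Hl'.
    destruct (Compare_dec.le_lt_dec (depth T w) N) as [h|h].
    + rewrite fsum_zero.
      * rewrite !anc_small by lia. set (x := f w). ceq.
      * intros v Hv. apply lev_spec in Hv. apply p_zero. intros Hs.
        apply sector_iter in Hs. lia.
    + rewrite (fsum_unique T _ _ w (anc T (S N) w)).
      * rewrite p_one by apply anc_sector. rewrite (anc_S T N w h).
        set (x := f (anc T (S N) w)). set (y := f (parent T (anc T (S N) w))). ceq.
      * apply lev_nodup.
      * apply lev_spec. rewrite depth_anc. lia.
      * intros v Hv Hne. apply lev_spec in Hv. apply p_zero. intros Hs. apply Hne.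
        apply sector_iter in Hs. destruct Hs as [Hs _]. rewrite Hs. unfold anc. rewrite Hv. reflexivity.
Qed.

Lemma ell_ge1 x : 1 <= x -> forall j, 1 <= ell j x.
Proof.
  intros Hx. assert (H : forall j, 1 <= ell j x /\ 1 <= ell (S j) x).
  { induction j.
    - simpl. split; [lra|]. assert (0 <= ln x) by (rewrite <- ln_1; apply ln_le; lra). lra.
    - split; [apply IHj|]. destruct IHj as [_ H1]. change (1 <= 1 + ln (ell (S j) x)).
      assert (0 <= ln (ell (S j) x)) by (rewrite <- ln_1; apply ln_le; lra). lra. }
  intros j; apply H.
Qed.

Lemma prod_ell_ge1 x : 1 <= x -> forall k, 1 <= prod_ell k x.
Proof.
  intros Hx k. induction k; simpl; [lra|].
  pose proof (ell_ge1 x Hx k). nra.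
Qed.

Lemma wt_nonneg (T : rooted_tree) k (v : T) : 0 <= wt T k v.
Proof.
  unfold wt. destruct (depth T v) as [|d] eqn:E.
  - simpl. lra.
  - assert (1 <= INR (S d)) by (apply (le_INR 1); lia).
    pose proof (prod_ell_ge1 _ H k). nra.
Qed.

Lemma Df_nonneg (T : rooted_tree) f (v : T) : 0 <= Df T f v.
Proof. apply Cmod_ge_0. Qed.

Lemma fsum_par (T : rooted_tree) l (w : T) : ~ In w (map snd l) -> fsum T l w = fsum T l (parent T w).
Proof.
  induction l as [|a l IH]; intros H; [reflexivity|].
  rewrite !fsum_cons. rewrite IH by (intros h; apply H; right; exact h).
  rewrite (p_par T (snd a) w); [reflexivity|]. intros h; apply H; left; symmetry; exact h.
Qed.

Lemma Cminus_self (x : C) : Cminus x x = RtoC 0.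
Proof. ceq. Qed.

Lemma fold_max_ge {A} (F : A -> R) l x : In x l -> F x <= fold_right (fun v acc => Rmax (F v) acc) 0 l.
Proof.
  induction l; simpl; [tauto|]. intros [->|h]; [apply Rmax_l|].
  eapply Rle_trans; [apply IHl; exact h| apply Rmax_r].
Qed.

Lemma fold_max_nonneg {A} (F : A -> R) l : 0 <= fold_right (fun v acc => Rmax (F v) acc) 0 l.
Proof. induction l; simpl; [lra|]. eapply Rle_trans; [exact IHl|apply Rmax_r]. Qed.

Lemma fold_maxn_ge {A} (F : A -> nat) l x : In x l -> (F x <= fold_right (fun v acc => Nat.max (F v) acc) 0%nat l)%nat.
Proof. induction l; simpl; [tauto|]. intros [->|h]; [lia|]. specialize (IHl h). lia. Qed.

Lemma P_L0 (T : rooted_tree) k g : in_P T g -> in_L0 T k g.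
Proof.
  intros [l Hl].
  assert (HD : forall w, ~ In w (map snd l) -> Df T g w = 0).
  { intros w Hw. unfold Df. rewrite !Hl. change (Cmod (Cminus (fsum T l w) (fsum T l (parent T w))) = 0).
    rewrite <- fsum_par by exact Hw. rewrite Cminus_self. apply Cmod_0. }
  split.
  - exists (fold_right (fun v acc => Rmax (wt T k v * Df T g v) acc) 0 (map snd l)).
    intros v Hv. destruct (classic (In v (map snd l))) as [h|h].
    + apply (fold_max_ge (fun v => wt T k v * Df T g v)). exact h.
    + rewrite HD by exact h. rewrite Rmult_0_r. apply fold_max_nonneg.
  - intros eps Heps. exists (S (fold_right (fun v acc => Nat.max (depth T v) acc) 0%nat (map snd l))).
    intros v Hv Hd. rewrite HD. rewrite Rmult_0_r, Rabs_R0. exact Heps.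
    intros h. pose proof (fold_maxn_ge (depth T) _ _ h). lia.
Qed.

Lemma normk_le (T : rooted_tree) k h M : 0 <= M ->
  (forall v, v <> root T -> wt T k v * Df T h v <= M) -> normk T k h <= Cmod (h (root T)) + M.
Proof.
  intros HM H. unfold normk. apply Rplus_le_compat_l.
  destruct (Lub_Rbar_correct (fun x => exists v, v <> root T /\ x = wt T k v * Df T h v)) as [_ Hl].
  assert (Hb : Rbar_le (Lub_Rbar (fun x => exists v, v <> root T /\ x = wt T k v * Df T h v)) (Finite M)).
  { apply Hl. intros x [v [Hv ->]]. simpl. apply H; exact Hv. }
  destruct (Lub_Rbar _); simpl in *; lra.
Qed.

Lemma normk_ge (T : rooted_tree) k h M v :
  (forall v, v <> root T -> wt T k v * Df T h v <= M) -> v <> root T ->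
  wt T k v * Df T h v <= normk T k h - Cmod (h (root T)).
Proof.
  intros H Hv. unfold normk.
  destruct (Lub_Rbar_correct (fun x => exists v, v <> root T /\ x = wt T k v * Df T h v)) as [Hu Hl].
  assert (Hb : Rbar_le (Lub_Rbar (fun x => exists v, v <> root T /\ x = wt T k v * Df T h v)) (Finite M)).
  { apply Hl. intros x [u [Hu' ->]]. simpl. apply H; exact Hu'. }
  assert (Hx : Rbar_le (Finite (wt T k v * Df T h v)) (Lub_Rbar (fun x => exists v, v <> root T /\ x = wt T k v * Df T h v))).
  { apply Hu. exists v; auto. }
  destruct (Lub_Rbar _); simpl in *; lra.
Qed.

Lemma Df_tri (T : rooted_tree) (h f g : T -> C) v :
  (forall w, h w = Cplus (f w) (g w)) -> Df T h v <= Df T f v + Df T g v.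
Proof.
  intros E. unfold Df. rewrite !E.
  replace (Cminus (Cplus (f v) (g v)) (Cplus (f (parent T v)) (g (parent T v))))
    with (Cplus (Cminus (f v) (f (parent T v))) (Cminus (g v) (g (parent T v)))).
  apply Cmod_triangle.
  set (a := f v). set (b := g v). set (c := f (parent T v)). set (d := g (parent T v)). ceq.
Qed.

Lemma L0_tri (T : rooted_tree) k (h f g : T -> C) :
  (forall w, h w = Cplus (f w) (g w)) -> in_L0 T k f -> in_L0 T k g -> in_L0 T k h.
Proof.
  intros E [[M1 H1] Hf] [[M2 H2] Hg].
  assert (K : forall v, wt T k v * Df T h v <= wt T k v * Df T f v + wt T k v * Df T g v).
  { intros v. rewrite <- Rmult_plus_distr_l. apply Rmult_le_compat_l; [apply wt_nonneg| apply Df_tri; exact E]. }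
  split.
  - exists (M1 + M2). intros v Hv. specialize (K v). specialize (H1 v Hv). specialize (H2 v Hv). lra.
  - intros eps Heps. destruct (Hf (eps/2)) as [N1 HN1]; [lra|]. destruct (Hg (eps/2)) as [N2 HN2]; [lra|].
    exists (Nat.max N1 N2). intros v Hv Hd.
    specialize (HN1 v Hv ltac:(lia)). specialize (HN2 v Hv ltac:(lia)). specialize (K v).
    pose proof (wt_nonneg T k v). pose proof (Df_nonneg T h v). pose proof (Df_nonneg T f v). pose proof (Df_nonneg T g v).
    rewrite Rabs_pos_eq in * by (apply Rmult_le_pos; auto). lra.
Qed.

Fixpoint decode (fuel n : nat) : list nat :=
  match fuel with
  | O => nil
  | S f => match n with
           | O => nil
           | S n' => let (a, b) := Cantor.of_nat n' in a :: decode f b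
           end
  end.

Fixpoint encode (l : list nat) : nat :=
  match l with nil => O | a :: l' => S (Cantor.to_nat (a, encode l')) end.

Lemma decode_encode l : decode (length l) (encode l) = l.
Proof. induction l; [reflexivity|]. simpl length. cbn [encode decode]. rewrite Cantor.cancel_of_to. f_equal; exact IHl. Qed.

Definition cgrid (m c : nat) : C :=
  let (a, r) := Cantor.of_nat c in let (b, r') := Cantor.of_nat r in let (e, g) := Cantor.of_nat r' in
  ((INR a - INR b) / (INR m + 1), (INR e - INR g) / (INR m + 1)).

Lemma real_approx (m : nat) (x : R) : exists a b : nat,
  Rabs (x - (INR a - INR b) / (INR m + 1)) <= 1 / (INR m + 1).
Proof.
  pose proof (pos_INR m) as Hm.
  set (z := up (x * (INR m + 1))). destruct (archimed (x * (INR m + 1))) as [H1 H2]. fold z in H1, H2.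
  exists (Z.to_nat z), (Z.to_nat (- z)).
  assert (E : (Z.of_nat (Z.to_nat z) - Z.of_nat (Z.to_nat (- z)) = z)%Z) by lia.
  assert (E2 : INR (Z.to_nat z) - INR (Z.to_nat (- z)) = IZR z).
  { rewrite !INR_IZR_INZ, <- minus_IZR, E. reflexivity. }
  rewrite E2. assert (Hp : 0 < INR m + 1) by lra.
  assert (Hd : IZR z / (INR m + 1) - x <= 1 / (INR m + 1) /\ x < IZR z / (INR m + 1)).
  { split.
    - apply (Rmult_le_reg_r (INR m + 1)); [lra|]. unfold Rdiv.
      rewrite Rmult_minus_distr_r, !Rmult_assoc, Rinv_l by lra. lra.
    - apply (Rmult_lt_reg_r (INR m + 1)); [lra|]. unfold Rdiv.
      rewrite !Rmult_assoc, Rinv_l by lra. lra. }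
  rewrite Rabs_minus_sym, Rabs_pos_eq by lra. lra.
Qed.

Lemma Cmod_le_sum (x y : R) : Cmod (x, y) <= Rabs x + Rabs y.
Proof.
  replace (x, y) with (Cplus (RtoC x) (Cmult Ci (RtoC y))).
  - eapply Rle_trans; [apply Cmod_triangle|]. rewrite Cmod_mult, Cmod_Ci, !Cmod_R. lra.
  - unfold Cplus, Cmult, Ci, RtoC; simpl. apply injective_projections; simpl; ring.
Qed.

Lemma grid_approx (m : nat) (z : C) : exists c, Cmod (Cminus z (cgrid m c)) <= 2 / (INR m + 1).
Proof.
  destruct z as [x y].
  destruct (real_approx m x) as [a [b Hab]]. destruct (real_approx m y) as [e [g Heg]].
  exists (Cantor.to_nat (a, Cantor.to_nat (b, Cantor.to_nat (e, g)))).
  unfold cgrid. repeat (rewrite Cantor.cancel_of_to; cbv beta iota).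
  unfold Cminus, Cplus, Copp; simpl.
  eapply Rle_trans; [apply Cmod_le_sum|].
  change (x + - ((INR a - INR b) / (INR m + 1))) with (x - (INR a - INR b) / (INR m + 1)).
  change (y + - ((INR e - INR g) / (INR m + 1))) with (y - (INR e - INR g) / (INR m + 1)).
  unfold Rdiv in *. lra.
Qed.

Fixpoint idx (T : rooted_tree) (x : T) (l : list T) : nat :=
  match l with nil => O | y :: l' => if Tdec T x y then O else S (idx T x l') end.

Lemma nth_idx (T : rooted_tree) (x : T) l (g : T -> nat) : In x l -> nth (idx T x l) (map g l) O = g x.
Proof.
  induction l as [|y l IH]; simpl; [tauto|]. intros H.
  destruct (Tdec T x y) as [->|hne]; [reflexivity|]. apply IH. destruct H; [congruence|auto].
Qed.

Definition dseq (T : rooted_tree) (n : nat) : T -> C :=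
  let (N, r) := Cantor.of_nat n in let (m, r2) := Cantor.of_nat r in let (fu, c) := Cantor.of_nat r2 in
  fun w => cgrid m (nth (idx T (anc T N w) (all_le T N)) (decode fu c) O).

Lemma dseq_P (T : rooted_tree) n : in_P T (dseq T n).
Proof.
  unfold dseq. destruct (Cantor.of_nat n) as [N r]. destruct (Cantor.of_nat r) as [m r2].
  destruct (Cantor.of_nat r2) as [fu c].
  apply (in_P_anc T (fun u => cgrid m (nth (idx T u (all_le T N)) (decode fu c) O)) N).
Qed.

Lemma dseq_eq (T : rooted_tree) N m fu c w :
  dseq T (Cantor.to_nat (N, Cantor.to_nat (m, Cantor.to_nat (fu, c)))) w =
  cgrid m (nth (idx T (anc T N w) (all_le T N)) (decode fu c) O).
Proof. unfold dseq. repeat (rewrite Cantor.cancel_of_to; cbv beta iota). reflexivity. Qed.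

Definition ccode (m : nat) (z : C) : nat :=
  proj1_sig (constructive_indefinite_description _ (grid_approx m z)).

Lemma ccode_spec m z : Cmod (Cminus z (cgrid m (ccode m z))) <= 2 / (INR m + 1).
Proof. unfold ccode. destruct (constructive_indefinite_description _ _) as [c Hc]. exact Hc. Qed.

Lemma wt_le (T : rooted_tree) k N (v : T) : (depth T v <= N)%nat ->
  wt T k v <= fold_right (fun j acc => Rmax (INR j * prod_ell k (INR j)) acc) 0 (seq 0 (S N)).
Proof.
  intros H. apply (fold_max_ge (fun j => INR j * prod_ell k (INR j))). apply in_seq. lia.
Qed.

Lemma dense_d (T : rooted_tree) k f : in_L0 T k f ->
  forall eps, 0 < eps -> exists n, normk T k (fsub T f (dseq T n)) < eps.
Proof.
  intros [_ Hf] eps Heps.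
  destruct (Hf (eps/2)) as [N HN]; [lra|].
  set (W := fold_right (fun j acc => Rmax (INR j * prod_ell k (INR j)) acc) 0 (seq 0 (S N))).
  assert (HW : 0 <= W) by apply fold_max_nonneg.
  set (dl := eps / (4 * (W + 1))).
  assert (Hdl : 0 < dl) by (unfold dl; apply Rdiv_lt_0_compat; lra).
  destruct (nfloor_ex (2 / dl)) as [m Hm]. { apply Rlt_le, Rdiv_lt_0_compat; lra. }
  pose proof (pos_INR m) as Hm0.
  assert (Hmd : 2 / (INR m + 1) < dl).
  { assert (2 < dl * (INR m + 1)).
    { destruct Hm as [_ Hm]. apply (Rmult_lt_compat_l dl) in Hm; [|lra].
      unfold Rdiv in Hm. rewrite <- Rmult_assoc, (Rmult_comm dl 2), Rmult_assoc, Rinv_r in Hm by lra. lra. }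
    apply (Rmult_lt_reg_r (INR m + 1)); [lra|]. unfold Rdiv. rewrite Rmult_assoc, Rinv_l by lra. lra. }
  set (s := map (fun v => ccode m (f v)) (all_le T N)).
  exists (Cantor.to_nat (N, Cantor.to_nat (m, Cantor.to_nat (length s, encode s)))).
  set (n := Cantor.to_nat _).
  set (q := fun u => cgrid m (ccode m (f u))).
  assert (Hd : forall w, dseq T n w = q (anc T N w)).
  { intros w. unfold n. rewrite dseq_eq, decode_encode. unfold s. rewrite nth_idx. reflexivity.
    apply all_le_spec. rewrite depth_anc. lia. }
  assert (Hq : forall u, Cmod (Cminus (f u) (q u)) <= dl).
  { intros u. unfold q. pose proof (ccode_spec m (f u)). lra. }
  apply Rle_lt_trans with (Cmod (fsub T f (dseq T n) (root T)) + eps / 2).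
  - apply normk_le; [lra|]. intros v Hv. unfold Df, fsub. rewrite !Hd.
    destruct (Compare_dec.le_lt_dec (depth T v) N) as [h|h].
    + rewrite !anc_small by (try rewrite depth_par; lia).
      assert (E : Cminus (Cminus (f v) (q v)) (Cminus (f (parent T v)) (q (parent T v))) =
                  Cplus (Cminus (f v) (q v)) (Copp (Cminus (f (parent T v)) (q (parent T v))))) by ceq.
      rewrite E. eapply Rle_trans.
      { apply Rmult_le_compat_l; [apply wt_nonneg|]. eapply Rle_trans; [apply Cmod_triangle|].
        rewrite Cmod_opp. apply Rplus_le_compat; apply Hq. }
      eapply Rle_trans. { apply Rmult_le_compat_r; [lra|]. apply (wt_le T k N v h). }
      fold W. unfold dl. apply (Rmult_le_reg_r (4 * (W + 1))); [lra|].
      unfold Rdiv. replace (W * (eps * / (4 * (W + 1)) + eps * / (4 * (W + 1))) * (4 * (W + 1)))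
        with (2 * W * eps * ((4 * (W + 1)) * / (4 * (W + 1)))) by ring.
      rewrite Rinv_r by lra. nra.
    + rewrite <- (anc_big T N v h).
      replace (Cminus (Cminus (f v) (q (anc T N v))) (Cminus (f (parent T v)) (q (anc T N v))))
        with (Cminus (f v) (f (parent T v))) by ceq.
      specialize (HN v Hv ltac:(lia)). unfold Df in HN.
      rewrite Rabs_pos_eq in HN by (apply Rmult_le_pos; [apply wt_nonneg|apply Cmod_ge_0]). lra.
  - unfold fsub. rewrite Hd, anc_root. pose proof (Hq (root T)).
    assert (dl <= eps / 4).
    { unfold dl. apply Rmult_le_compat_l; [lra|]. apply Rinv_le_contravar; lra. }
    lra.
Qed.

Lemma Df_scal (T : rooted_tree) (a : C) f (v : T) :
  Df T (fun w => Cmult a (f w)) v = Cmod a * Df T f v.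
Proof.
  unfold Df. rewrite <- Cmod_mult. f_equal.
  set (x := f v). set (y := f (parent T v)). ceq.
Qed.

Theorem proposition2p10 (T : rooted_tree) (k : nat) :
  (* P is contained in L0^(k) and dense in it for ||.||_k *)
  (forall g : T -> C, in_P T g -> in_L0 T k g) /\
  (forall f : T -> C, in_L0 T k f ->
     forall eps, 0 < eps -> exists g, in_P T g /\ normk T k (fsub T f g) < eps) /\
  (* L0^(k) is a linear subspace of L^(k) *)
  (forall f : T -> C, in_L0 T k f -> in_L T k f) /\
  in_L0 T k (fun _ => RtoC 0) /\
  (forall f g : T -> C, in_L0 T k f -> in_L0 T k g ->
     in_L0 T k (fun w => Cplus (f w) (g w))) /\
  (forall (a : C) (f : T -> C), in_L0 T k f -> in_L0 T k (fun w => Cmult a (f w))) /\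
  (* closed in L^(k) *)
  (forall f : T -> C, in_L T k f ->
     (forall eps, 0 < eps -> exists g, in_L0 T k g /\ normk T k (fsub T f g) < eps) ->
     in_L0 T k f) /\
  (* separable: a countable dense subset *)
  (exists d : nat -> T -> C, (forall n, in_L0 T k (d n)) /\
     forall f : T -> C, in_L0 T k f ->
       forall eps, 0 < eps -> exists n, normk T k (fsub T f (d n)) < eps).
Proof.
  split; [intros g; apply P_L0|].
  split.
  { intros f Hf eps Heps. destruct (dense_d T k f Hf eps Heps) as [n Hn].
    exists (dseq T n). split; [apply dseq_P| exact Hn]. }
  split; [intros f [H _]; exact H|].
  split.
  { apply P_L0. exists nil. intros w. reflexivity. }
  split.
  { intros f g Hf Hg. apply (L0_tri T k _ f g); auto. }
  split.
  { intros a f [[M HM] Hf]. split.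
    - exists (Cmod a * M). intros v Hv. rewrite Df_scal.
      specialize (HM v Hv). pose proof (Cmod_ge_0 a).
      replace (wt T k v * (Cmod a * Df T f v)) with (Cmod a * (wt T k v * Df T f v)) by ring.
      apply Rmult_le_compat_l; auto.
    - intros eps Heps. pose proof (Cmod_ge_0 a).
      destruct (Hf (eps / (Cmod a + 1))) as [N HN]. { apply Rdiv_lt_0_compat; lra. }
      exists N. intros v Hv Hd. specialize (HN v Hv Hd). rewrite Df_scal.
      pose proof (wt_nonneg T k v). pose proof (Df_nonneg T f v).
      rewrite Rabs_pos_eq in HN by (apply Rmult_le_pos; auto).
      rewrite Rabs_pos_eq by (apply Rmult_le_pos; [auto| apply Rmult_le_pos; auto]).
      replace (wt T k v * (Cmod a * Df T f v)) with (Cmod a * (wt T k v * Df T f v)) by ring.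
      apply Rle_lt_trans with ((Cmod a + 1) * (wt T k v * Df T f v)).
      + apply Rmult_le_compat_r; [apply Rmult_le_pos; auto| lra].
      + apply (Rmult_lt_compat_l (Cmod a + 1)) in HN; [|lra].
        replace ((Cmod a + 1) * (eps / (Cmod a + 1))) with eps in HN by (field; lra). exact HN. }
  split.
  { intros f [M HM] Happ. split; [exists M; exact HM|].
    intros eps Heps. destruct (Happ (eps / 2)) as [g [[[Mg HMg] Hg] Hn]]; [lra|].
    destruct (Hg (eps / 2)) as [N HN]; [lra|].
    exists N. intros v Hv Hd. specialize (HN v Hv Hd).
    assert (Hb : forall u, u <> root T -> wt T k u * Df T (fsub T f g) u <= M + Mg).
    { intros u Hu. pose proof (wt_nonneg T k u) as Hw0.
      assert (H0 : Df T (fsub T f g) u <= Df T f u + Df T (fun w => Cmult (RtoC (-1)) (g w)) u).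
      { apply Df_tri. intros w. unfold fsub. set (x := f w). set (y := g w). ceq. }
      rewrite (Df_scal T (RtoC (-1)) g u) in H0. replace (Cmod (RtoC (-1))) with 1 in H0 by (rewrite Cmod_R, Rabs_left; lra). rewrite Rmult_1_l in H0.
      specialize (HM u Hu). specialize (HMg u Hu).
      apply Rmult_le_compat_l with (r := wt T k u) in H0; auto. lra. }
    pose proof (normk_ge T k (fsub T f g) _ v Hb Hv) as Hge.
    pose proof (Cmod_ge_0 (fsub T f g (root T))).
    assert (H1 : Df T f v <= Df T (fsub T f g) v + Df T g v).
    { apply Df_tri. intros w. unfold fsub. set (x := f w). set (y := g w). ceq. }
    pose proof (wt_nonneg T k v). pose proof (Df_nonneg T f v). pose proof (Df_nonneg T g v).
    apply Rmult_le_compat_l with (r := wt T k v) in H1; auto.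
    rewrite Rabs_pos_eq in * by (apply Rmult_le_pos; auto). lra. }
  exists (dseq T). split.
  - intros n. apply P_L0, dseq_P.
  - intros f Hf. apply dense_d; exact Hf.
Qed.
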